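(* Let a quantum circuit with input-node set $I$ be given, together with an input state vector $|\psi\rangle\in Q^{\otimes I}$. Then there is a unique function assigning to each stage $Z$ of the circuit a vector $C(|\psi\rangle,Z)\in Q^{\otimes\mathrm{Exit}(Z)}$ such that: (1) $C(|\psi\rangle,\emptyset)=|\psi\rangle$ (note $\mathrm{Exit}(\emptyset)=I$); (2) whenever $G$ is a gate ready at a stage $Z$, $$C(|\psi\rangle,Z+G)=(I_R\otimes U_G)\,C(|\psi\rangle,Z),$$ where $R=\mathrm{Exit}(Z)\setminus\pi(G)$, $I_R$ is the identity operator on $Q^{\otimes R}$, and $Q^{\otimes\mathrm{Exit}(Z)}$ and $Q^{\otimes\mathrm{Exit}(Z+G)}$ are identified with $Q^{\otimes R}\otimes Q^{\otimes\iota_G}$ and $Q^{\otimes R}\otimes Q^{\otimes o_G}$ respectively as described in the context.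
   Context: $Q=\mathbb{C}^2$; for a finite set $S$, $Q^{\otimes S}$ is the tensor product of $S$-indexed copies of $Q$; a bijection $S\to S'$ induces a canonical isomorphism $Q^{\otimes S}\cong Q^{\otimes S'}$, and for disjoint $S,T$ one has canonically $Q^{\otimes(S\sqcup T)}\cong Q^{\otimes S}\otimes Q^{\otimes T}$. A quantum circuit consists of a finite set $I$ of input nodes, a finite set $O$ of output nodes, a finite set of gates, an assignment to each gate $G$ of a triple $(\iota_G,o_G,U_G)$ with $\iota_G,o_G$ finite sets and $U_G:Q^{\otimes\iota_G}\to Q^{\otimes o_G}$ unitary, and a bijective provider function $\pi$ from consumers to producers. Producers are the input nodes and output ports $(G,\mathrm{out},l)$, $l\in o_G$; consumers are output nodes and input ports $(G,\mathrm{in},l)$, $l\in\iota_G$ (all pairwise distinct). The relation $G\prec H$ on gates (iff $\pi$ maps some input port of $H$ to an output port of $G$) is required to be acyclic. For a gate $H$, $\pi(H)=\{\pi(H,\mathrm{in},l):l\in\iota_H\}$. A stage is a set $Z$ of gates such that $H\in Z$ and $H'\prec H$ imply $H'\in Z$. $\mathrm{Exit}(Z)$ is the set of producers that are input nodes or output ports of gates in $Z$ and that lie in no $\pi(H)$ with $H\in Z$. A gate $G\notin Z$ is ready at $Z$ if every $H\prec G$ lies in $Z$; then $Z+G:=Z\cup\{G\}$. If $G$ is ready at $Z$ and $R=\mathrm{Exit}(Z)\setminus\pi(G)$, then $\mathrm{Exit}(Z)=R\sqcup\pi(G)$ and $\mathrm{Exit}(Z+G)=R\sqcup\{(G,\mathrm{out},m):m\in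 o_G\}$; using the bijections $l\mapsto\pi(G,\mathrm{in},l)$ ($l\in\iota_G$) and $m\mapsto(G,\mathrm{out},m)$ ($m\in o_G$), one identifies $Q^{\otimes\mathrm{Exit}(Z)}$ with $Q^{\otimes R}\otimes Q^{\otimes\iota_G}$ and $Q^{\otimes\mathrm{Exit}(Z+G)}$ with $Q^{\otimes R}\otimes Q^{\otimes o_G}$. *)

(* Defs.v *)
From HB Require Import structures.
From mathcomp Require Import all_boot all_order all_algebra.
From mathcomp Require Import complex.
From mathcomp Require Import reals.
Set Implicit Arguments. Unset Strict Implicit. Unset Printing Implicit Defensive.
Import Order.TTheory GRing.Theory Num.Theory.
Local Open Scope ring_scope.

(* Basis assignments of Q^{ox S} for S a finite subset of a finType T:
   functions S -> bool.  A vector of Q^{ox S} is its coordinate function. *)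
Definition basis (T : finType) (S : {set T}) := {ffun {x : T | x \in S} -> bool}.
Definition tens (K : Type) (T : finType) (S : {set T}) := {ffun basis S -> K}.

Definition tot (T : finType) (S : {set T}) (b : basis S) : T -> bool :=
  fun x => match insub x with Some y => b y | None => false end.
Definition restr (T : finType) (S : {set T}) (f : T -> bool) : basis S :=
  [ffun x => f (val x)].

Section Circuits.
Variables (R : realType) (In Out Gate L : finType).
Local Notation C := (R[i]).

(* producers: input nodes (inl i) and output ports (inr (G,m)), m in o_G;
   consumers: output nodes (inl o) and input ports (inr (G,l)), l in iota_G *)
Definition producer := (In + (Gate * L))%type.
Definition consumer := (Out + (Gate * L))%type.

Record circuit := Circuit {
  iports : Gate -> {set L};
  oports : Gate -> {set L};
  gU : forall G : Gate, {ffun basis (oports G) -> tens C (iports G)};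
      (* U_G : Q^{ox iota_G} -> Q^{ox o_G}, gU G b a = <b| U_G |a> *)
  prov : consumer -> producer
}.

Variable c : circuit.

Definition valid_prod (p : producer) : bool :=
  match p with inl _ => true | inr (G, m) => m \in oports c G end.
Definition valid_cons (q : consumer) : bool :=
  match q with inl _ => true | inr (G, l) => l \in iports c G end.

Definition unitary (A B : finType) (U : {ffun A -> {ffun B -> C}}) : Prop :=
  (forall a a' : B, \sum_(b : A) (U b a)^* * U b a' = (a == a')%:R) /\
  (forall b b' : A, \sum_(a : B) U b a * (U b' a)^* = (b == b')%:R).

Definition prec (G H : Gate) : bool :=
  [exists l in iports c H, exists m : L, prov c (inr (H, l)) == inr (G, m)].

Definition wf_circuit : Prop :=
  (forall G, unitary (gU c G)) /\
  (forall q, valid_cons q -> valid_prod (prov c q)) /\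
  {in valid_cons &, injective (prov c)} /\
  (forall p, valid_prod p -> exists2 q, valid_cons q & prov c q = p) /\
  (forall G H, prec G H -> ~~ connect prec H G).

Definition provs (H : Gate) : {set producer} :=
  [set prov c (inr (H, l)) | l in iports c H].

Definition stage (Z : {set Gate}) : Prop :=
  forall H H', H \in Z -> prec H' H -> H' \in Z.

Definition from_inputs_or (Z : {set Gate}) (p : producer) : bool :=
  match p with inl _ => true | inr (G, _) => G \in Z end.

Definition Exit (Z : {set Gate}) : {set producer} :=
  [set p | valid_prod p && from_inputs_or Z p &&
           [forall H in Z, p \notin provs H]].

Definition ready (Z : {set Gate}) (G : Gate) : Prop :=
  G \notin Z /\ forall H, prec H G -> H \in Z.

(* Given a basis assignment b of Exit(Z+G) (i.e. of R ⊔ outputs of G) and a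
   basis assignment a of iota_G, the basis assignment of Exit(Z) = R ⊔ pi(G)
   obtained via l |-> pi(G,in,l). *)
Definition glue (Z : {set Gate}) (G : Gate) (b : basis (Exit (Z :|: [set G])))
    (a : basis (iports c G)) : basis (Exit Z) :=
  restr (Exit Z) (fun x =>
    if x \in provs G then
      match [pick l in iports c G | prov c (inr (G, l)) == x] with
      | Some l => tot a l | None => false end
    else tot b x).

Definition outpart (Z : {set Gate}) (G : Gate) (b : basis (Exit (Z :|: [set G])))
  : basis (oports c G) :=
  restr (oports c G) (fun m => tot b (inr (G, m))).

Definition circuit_states (psi : {ffun {ffun In -> bool} -> C})
    (St : forall Z : {set Gate}, tens C (Exit Z)) : Prop :=
  (* (1): C(psi, {}) = psi, identifying Exit({}) with I via i |-> inl i *)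
  (forall b : basis (Exit set0), St set0 b = psi [ffun i => tot b (inl i)]) /\
  (forall Z G, stage Z -> ready Z G ->
     forall b : basis (Exit (Z :|: [set G])),
       St (Z :|: [set G]) b =
       \sum_(a : basis (iports c G)) gU c G (outpart b) a * St Z (glue b a)).

End Circuits.

Arguments circuit_states {R In Out Gate L} c psi St.
Arguments stage {R In Out Gate L} c Z.
Arguments Exit {R In Out Gate L} c Z.
Arguments wf_circuit {R In Out Gate L} c.

(* Main.v *)
Require Import Defs.
From HB Require Import structures.
From mathcomp Require Import all_boot all_order all_algebra.
From mathcomp Require Import complex.
From mathcomp Require Import reals.
Set Implicit Arguments. Unset Strict Implicit. Unset Printing Implicit Defensive.
Import Order.TTheory GRing.Theory Num.Theory.
Local Open Scope ring_scope.

Lemma tot_in (T : finType) (S : {set T}) (b : basis S) (x : T) (h : x \in S) :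
  tot b x = b (Sub x h).
Proof. by rewrite /tot insubT. Qed.

Lemma tot_out (T : finType) (S : {set T}) (b : basis S) (x : T) :
  x \notin S -> tot b x = false.
Proof. by move=> h; rewrite /tot insubF //; apply/negbTE. Qed.

Lemma tot_restr (T : finType) (S : {set T}) (f : T -> bool) (x : T) :
  tot (restr S f) x = (x \in S) && f x.
Proof.
case: (boolP (x \in S)) => h; last by rewrite tot_out.
by rewrite (tot_in _ h) /restr ffunE.
Qed.

Lemma basis_ext (T : finType) (S : {set T}) (a a' : basis S) :
  (forall x, x \in S -> tot a x = tot a' x) -> a = a'.
Proof.
move=> h; apply/ffunP => -[x hx].
have := h x hx; rewrite !(tot_in _ hx).
by have -> : (Sub x hx : {x : T | x \in S}) = exist _ x hx by [].
Qed.

Lemma restr_ext (T : finType) (S : {set T}) (f g : T -> bool) :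
  (forall x, x \in S -> f x = g x) -> restr S f = restr S g.
Proof. by move=> h; apply/ffunP => x; rewrite !ffunE h // (valP x). Qed.

Section Proof.
Variables (R : realType) (In Out Gate L : finType).
Variable c : circuit R In Out Gate L.
Hypothesis wf : wf_circuit c.
Local Notation C := (R[i]).
Local Notation prod := (producer In Gate L).

Lemma prec_of H l G' m : l \in iports c H -> prov c (inr (H, l)) = inr (G', m) ->
  prec c G' H.
Proof.
move=> hl he; apply/existsP; exists l; rewrite hl /=; apply/existsP; exists m.
by rewrite he.
Qed.

Lemma prec_irr G : ~~ prec c G G.
Proof.
apply/negP=> h; case: wf => _ [_ [_ [_ ac]]].
by move: (ac _ _ h); rewrite connect0.
Qed.

Lemma prov_inj G l H l' : l \in iports c G -> l' \in iports c H ->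
  prov c (inr (G, l)) = prov c (inr (H, l')) -> G = H /\ l = l'.
Proof.
case: wf => _ [_ [inj _]] hl hl' he.
by have [-> ->] : (inr (G, l) : consumer Out Gate L) = inr (H, l') by apply: inj.
Qed.

Lemma prov_valid G l : l \in iports c G -> valid_prod c (prov c (inr (G, l))).
Proof. by case: wf => _ [v _] hl; apply: v. Qed.

Variable psi : {ffun {ffun In -> bool} -> C}.

Section Step.
Variables (Z : {set Gate}) (G : Gate).
Hypothesis stZ : stage c Z.
Hypothesis rdy : ready c Z G.

Definition isOut (p : prod) : bool :=
  if p is inr (G', m) then (G' == G) && (m \in oports c G) else false.

Lemma GnZ : G \notin Z. Proof. by case: rdy. Qed.

Lemma in_provs p H : (p \in provs c H) = [exists l in iports c H, prov c (inr (H, l)) == p].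
Proof.
apply/imsetP/existsP => [[l hl ->]|[l /andP[hl /eqP <-]]]; last by exists l.
by exists l; rewrite hl eqxx.
Qed.

Lemma isOut_Exit p : isOut p -> p \in Exit c (Z :|: [set G]).
Proof.
case: p => [//|[G' m]] /andP[/eqP -> hm].
rewrite inE /= hm /= !inE eqxx orbT /=.
apply/forallP => H; apply/implyP => hH; rewrite in_provs; apply/negP.
case/existsP => l /andP[hl /eqP he].
have hp := prec_of hl he.
move: hH; rewrite !inE => /orP[hH|/eqP hH].
  by move: GnZ; rewrite (stZ hH hp).
by move: hp; rewrite hH (negbTE (prec_irr G)).
Qed.

Lemma isOut_notP p : isOut p -> ~~ (valid_prod c p && from_inputs_or Z p).
Proof.
case: p => [//|[G' m]] /andP[/eqP -> hm] /=; by rewrite (negbTE GnZ) andbF.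
Qed.

Lemma isOut_notExit p : isOut p -> p \notin Exit c Z.
Proof.
move=> h; rewrite inE; apply/negP => /andP[/andP[h1 h2] _].
by move: (isOut_notP h); rewrite h1 h2.
Qed.

Lemma notOut_P p : ~~ isOut p ->
  (valid_prod c p && from_inputs_or (Z :|: [set G]) p) =
  (valid_prod c p && from_inputs_or Z p).
Proof.
case: p => [//|[G' m]] /=; rewrite !inE.
case: (eqVneq G' G) => [->|_] /=; last by rewrite orbF.
by move=> /negbTE ->.
Qed.

Lemma notOut_Exit p : ~~ isOut p ->
  (p \in Exit c (Z :|: [set G])) = (p \in Exit c Z) && (p \notin provs c G).
Proof.
move=> h; rewrite !inE notOut_P //.
case: (valid_prod c p && from_inputs_or Z p) => //=.
apply/forallP/andP => [hf|[/forallP hf hG] H].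
  split; last by have := hf G; rewrite !inE eqxx orbT.
  by apply/forallP => H; apply/implyP => hH; have := hf H; rewrite !inE hH.
apply/implyP; rewrite !inE => /orP[hH|/eqP ->] //.
by have := hf H; rewrite hH.
Qed.

Lemma provG_Exit l : l \in iports c G -> prov c (inr (G, l)) \in Exit c Z.
Proof.
move=> hl; rewrite inE prov_valid //=.
apply/andP; split.
  case he: (prov c (inr (G, l))) => [//|[H m]] /=.
  by case: rdy => _; apply; apply: (prec_of hl he).
apply/forallP => H; apply/implyP => hH; rewrite in_provs; apply/negP.
case/existsP => l' /andP[hl' /eqP he].
have [eH _] := prov_inj hl hl' (esym he).
by move: GnZ; rewrite eH hH.
Qed.

Lemma provH_notOut H l : H \in Z :|: [set G] -> l \in iports c H ->
  ~~ isOut (prov c (inr (H, l))).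
Proof.
move=> hH hl; case he: (prov c (inr (H, l))) => [//|[G' m]] /=.
apply/negP => /andP[/eqP eG _]; subst G'.
have hp := prec_of hl he.
move: hH; rewrite !inE => /orP[hH|/eqP hH].
  by move: GnZ; rewrite (stZ hH hp).
by move: hp; rewrite hH (negbTE (prec_irr G)).
Qed.


Definition Pz (Z : {set Gate}) (p : prod) := valid_prod c p && from_inputs_or Z p.
Definition hterm (H : Gate) (w : {ffun prod -> bool}) : C :=
  gU c H (restr (oports c H) (fun m => w (inr (H, m))))
         (restr (iports c H) (fun l => w (prov c (inr (H, l))))).
Definition Fw (Z : {set Gate}) (w : {ffun prod -> bool}) : C :=
  psi [ffun i => w (inl i)] * \prod_(H in Z) hterm H w.
Definition condw (Z : {set Gate}) (b : basis (Exit c Z)) (w : {ffun prod -> bool}) :=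
  [forall p, (p \in Exit c Z) ==> (w p == tot b p)] && [forall p, ~~ Pz Z p ==> ~~ w p].
Definition StD (Z : {set Gate}) : tens C (Exit c Z) :=
  [ffun b => \sum_(w | condw b w) Fw Z w].

Definition condZ' (b : basis (Exit c (Z :|: [set G]))) (w : {ffun prod -> bool}) :=
  [forall p, ((p \in Exit c Z) && (p \notin provs c G)) ==> (w p == tot b p)] &&
  [forall p, ~~ Pz Z p ==> ~~ w p].
Definition aw (w : {ffun prod -> bool}) : basis (iports c G) :=
  restr _ (fun l => w (prov c (inr (G, l)))).

Lemma glue_tot (b : basis (Exit c (Z :|: [set G]))) (a : basis (iports c G)) l : l \in iports c G ->
  tot (glue b a) (prov c (inr (G, l))) = tot a l.
Proof.
move=> hl; rewrite /glue tot_restr provG_Exit //=.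
have -> : prov c (inr (G, l)) \in provs c G by apply/imsetP; exists l.
case: pickP => [l' /andP[hl' /eqP he]|/(_ l)]; last by rewrite hl eqxx.
by have [_ ->] := prov_inj hl' hl he.
Qed.

Lemma glue_tot2 (b : basis (Exit c (Z :|: [set G]))) (a : basis (iports c G)) p : p \in Exit c Z -> p \notin provs c G ->
  tot (glue b a) p = tot b p.
Proof. by move=> h1 h2; rewrite /glue tot_restr h1 /= (negbTE h2). Qed.

Lemma condC (b : basis (Exit c (Z :|: [set G]))) (a : basis (iports c G)) w : condw (glue b a) w = condZ' b w && (a == aw w).
Proof.
rewrite /condw /condZ' -andbA [_ && (a == _)]andbC andbA; congr (_ && _).
apply/idP/idP.
  move/forallP => h; apply/andP; split.
    apply/forallP => p; apply/implyP => /andP[h1 h2].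
    by have := h p; rewrite h1 glue_tot2.
  apply/eqP/basis_ext => l hl; rewrite /aw tot_restr hl /=.
  by have := h (prov c (inr (G, l))); rewrite provG_Exit // glue_tot // => /eqP.
case/andP => /forallP h /eqP ->; apply/forallP => p; apply/implyP => hp.
case: (boolP (p \in provs c G)) => hpG.
  case/imsetP: hpG => l hl ->.
  by rewrite glue_tot // /aw tot_restr hl.
by have := h p; rewrite hp hpG glue_tot2.
Qed.

Lemma RHS_eq (b : basis (Exit c (Z :|: [set G]))) :
  \sum_(a : basis (iports c G)) gU c G (outpart b) a * StD Z (glue b a) =
  \sum_(w | condZ' b w) gU c G (outpart b) (aw w) * Fw Z w.
Proof.
transitivity (\sum_(a : basis (iports c G)) \sum_w
   ((condZ' b w && (a == aw w))%:R * (gU c G (outpart b) (aw w) * Fw Z w))).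
  apply: eq_bigr => a _; rewrite ffunE big_distrr /= big_mkcond /=.
  apply: eq_bigr => w _; rewrite condC.
  case: (boolP (_ && _)) => [/andP[_ /eqP <-]|_]; by rewrite ?mul1r ?mul0r.
rewrite exchange_big /= [RHS]big_mkcond /=; apply: eq_bigr => w _.
rewrite (bigD1 (aw w)) //= eqxx andbT big1 ?addr0 => [|a /negbTE ->].
  by case: (condZ' b w); rewrite ?mul1r ?mul0r.
by rewrite andbF mul0r.
Qed.

Definition phi (b : basis (Exit c (Z :|: [set G]))) (w : {ffun prod -> bool}) :
  {ffun prod -> bool} := [ffun p => if isOut p then tot b p else w p].
Definition psiw (w : {ffun prod -> bool}) : {ffun prod -> bool} :=
  [ffun p => if isOut p then false else w p].

Lemma LHS_eq (b : basis (Exit c (Z :|: [set G]))) :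
  StD (Z :|: [set G]) b =
  \sum_(w | condZ' b w) gU c G (outpart b) (aw w) * Fw Z w.
Proof.
rewrite ffunE (reindex_onto (phi b) psiw) /=; last first.
  move=> w /andP[/forallP h _]; apply/ffunP => p; rewrite !ffunE.
  case: (boolP (isOut p)) => // hp.
  by have := h p; rewrite isOut_Exit // => /eqP.
apply: eq_big => w.
  apply/idP/idP.
    case/andP => /andP[/forallP h1 /forallP h2] /eqP /ffunP h3.
    apply/andP; split; apply/forallP => p; apply/implyP.
      move=> /andP[hp1 hp2]; have hO : ~~ isOut p.
        by apply/negP => /isOut_notExit; rewrite hp1.
      by have := h1 p; rewrite notOut_Exit // hp1 hp2 /= /phi ffunE (negbTE hO).
    move=> hp; case: (boolP (isOut p)) => hO.
      by have := h3 p; rewrite !ffunE hO => <-.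
    by have := h2 p; rewrite /Pz notOut_P // hp /= /phi ffunE (negbTE hO).
  case/andP => /forallP h1 /forallP h2.
  apply/andP; split; last first.
    apply/eqP/ffunP => p; rewrite !ffunE; case: (boolP (isOut p)) => // hO.
    by apply/esym/negbTE; have := h2 p; rewrite isOut_notP ?hO.
  rewrite /condw; apply/andP; split; apply/forallP => p; apply/implyP; rewrite /phi ffunE.
    case: (boolP (isOut p)) => // hO; rewrite notOut_Exit // => hp.
    by have := h1 p; rewrite hp.
  case: (boolP (isOut p)) => hO; first by move=> hP; move: (isOut_Exit hO); rewrite inE => /andP[/andP[h3 h4] _]; move: hP; rewrite /Pz h3 h4.
  by rewrite /Pz notOut_P // => hp; have := h2 p; rewrite hp.
move=> _.
rewrite /Fw setUC big_setU1 ?GnZ //= mulrCA; congr (_ * (_ * _)).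
- rewrite /hterm; congr (gU c G _ _).
    by rewrite /outpart; apply: restr_ext => m hm; rewrite ffunE /= eqxx hm.
  apply: restr_ext => l hl; rewrite ffunE.
  by rewrite (negbTE (provH_notOut _ hl)) // !inE eqxx orbT.
- congr (psi _); apply/ffunP => i; by rewrite !ffunE.
- apply: eq_bigr => H hH; rewrite /hterm; congr (gU c H _ _).
    apply: restr_ext => m hm; rewrite ffunE /=.
    case: eqP => //= eH; exfalso; move: GnZ; by rewrite -eH hH.
  apply: restr_ext => l hl; rewrite ffunE.
  by rewrite (negbTE (provH_notOut _ hl)) // !inE hH.
Qed.

End Step.

Lemma Exit0 (p : prod) : (p \in Exit c set0) = (if p is inl _ then true else false).
Proof.
rewrite inE; case: p => [i|[H m]] /=; last by rewrite inE andbF.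
by apply/forallP => H; rewrite in_set0.
Qed.

Lemma Pz0 (p : prod) : Pz set0 p = (if p is inl _ then true else false).
Proof. by case: p => [i|[H m]] //=; rewrite /Pz /= in_set0 andbF. Qed.

Lemma StD_states : circuit_states c psi StD.
Proof.
split.
  move=> b; rewrite ffunE (big_pred1 [ffun p => tot b p]); last first.
    move=> w; apply/idP/eqP => [/andP[/forallP h1 /forallP h2]|->].
      apply/ffunP => p; rewrite ffunE; have := h1 p; have := h2 p.
      rewrite Exit0 Pz0; case: p => [i _ /eqP //|x /= /negbTE -> _].
      by rewrite tot_out ?Exit0.
    apply/andP; split; apply/forallP => p; rewrite ffunE ?eqxx ?implybT //.
    by rewrite Pz0; case: p => // x /=; rewrite tot_out ?Exit0.
  rewrite /Fw big_set0 mulr1; congr (psi _); apply/ffunP => i; by rewrite !ffunE.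
move=> Z G stZ rdy b.
by rewrite (LHS_eq stZ rdy) -(RHS_eq rdy).
Qed.

Lemma max_gate (Z : {set Gate}) G0 : G0 \in Z ->
  exists2 G, G \in Z & forall H, H \in Z -> ~~ prec c G H.
Proof.
move=> h0.
pose s G := #|[set H | connect (prec c) G H]|.
case: (arg_minnP s h0) => G hG hmin; exists G => // H hH; apply/negP => hp.
have := hmin H hH; rewrite leqNgt => /negP; apply.
apply: proper_card; apply/properP; split.
  apply/subsetP => x; rewrite !inE => hx.
  by apply: connect_trans hx; apply: connect1.
exists G; rewrite !inE ?connect0 //.
by case: wf => _ [_ [_ [_ ac]]]; apply: ac.
Qed.

Lemma uniq_states St' : circuit_states c psi St' ->
  forall Z, stage c Z -> St' Z = StD Z.
Proof.
move=> [h1 h2] Z.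
have [h1' h2'] := StD_states.
elim: {Z}_.+1 {-2}Z (ltnSn #|Z|) => // n IH Z hn stZ.
case: (set_0Vmem Z) => [->|[G0 hG0]].
  by apply/ffunP => b; rewrite h1 h1'.
case: (max_gate hG0) => G hG hmax.
have rdy : ready c (Z :\ G) G.
  split; first by rewrite !inE eqxx.
  move=> H hp; rewrite !inE (stZ _ _ hG hp) andbT.
  by apply/negP => /eqP eH; move: hp; rewrite eH (negbTE (prec_irr G)).
have st' : stage c (Z :\ G).
  move=> H H'; rewrite !inE => /andP[hHG hH] hp; rewrite (stZ _ _ hH hp) andbT.
  by apply/negP => /eqP eH; move: (hmax _ hH); rewrite -eH hp.
have eZ : Z = (Z :\ G) :|: [set G] by rewrite setUC setD1K.
have hlt : (#|Z :\ G| < n)%N.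
  by move: hn; rewrite (cardsD1 G Z) hG.
move: (IH _ hlt st') => eq'.
rewrite eZ; apply/ffunP => b.
by rewrite (h2 _ _ st' rdy) (h2' _ _ st' rdy) eq'.
Qed.

End Proof.

Theorem mainTheorem5 (R : realType) (In Out Gate L : finType)
    (c : circuit R In Out Gate L) (wf : wf_circuit c)
    (psi : {ffun {ffun In -> bool} -> R[i]}) :
  exists St : forall Z : {set Gate}, tens R[i] (Exit c Z),
    circuit_states c psi St /\
    (forall St' : forall Z : {set Gate}, tens R[i] (Exit c Z),
       circuit_states c psi St' -> forall Z, stage c Z -> St' Z = St Z).
Proof.
exists (StD c psi); split; first exact: StD_states.
by move=> St' hS Z hZ; apply: uniq_states.
Qed.
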